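(* Let $X$ and $Y$ be monotone sequence classes with $\varepsilon\le\alpha_{X,Y}$. Suppose that $X$ and $Y$ are finitely determined or finitely dominated and that one of them is finitely boundedly complete. Then for all Banach spaces $E,F$, $(E\otimes_{\alpha_{X,Y}}F)^*$ is isometrically isomorphic to $\mathcal{L}_{X,Y;\ell_1}(E,F;\mathbb{K})$, via the map sending $A$ to the linear functional $\sum_{j=1}^n x_j\otimes y_j\mapsto\sum_{j=1}^nA(x_j,y_j)$.
   Context: All Banach spaces are over $\mathbb{K}=\mathbb{R}$ or $\mathbb{C}$; $\varepsilon$ denotes the injective tensor norm. A sequence class is a rule $X$ assigning to each Banach space $E$ a Banach space $X(E)$ which is a vector subspace of $E^{\mathbb{N}}$ (coordinatewise operations) with $c_{00}(E)\subseteq X(E)$, $\|(x_j)\|_\infty\le\|(x_j)\|_{X(E)}$, and $\|x\cdot e_j\|_{X(E)}=\|x\|_E$ ($x$ in the $j$-th coordinate, zeros elsewhere). $(x_j)_{j=1}^n$ denotes $(x_1,\dots,x_n,0,0,\dots)$. $X$ is monotone if $\|(0,\dots,0,x_1,\dots,x_n,0,\dots)\|_{X(E)}=\|(x_1,\dots,x_n,0,\dots)\|_{X(E)}$ for any number of leading zeros. $X$ is finitely determined if: $(x_j)\in X(E)$ iff $\sup_k\|(x_j)_{j=1}^k\|_{X(E)}<\infty$, and then $\|(x_j)\|_{X(E)}$ equals this supremum. $X$ is finitely dominated if there is a finitely determined sequence class $Z$ with $X(E)$ a closed subspace of $Z(E)$ for all $E$ and either (i) for $(x_j)\in Z(E)$: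 $(x_j)\in X(E)$ iff $\lim_k\|(x_j)_{j=k}^\infty\|_{Z(E)}=0$, or (ii) for $(x_j)\in Z(E)$: $(x_j)\in X(E)$ iff $\lim_{k,l}\|(x_j)_{j=k}^l\|_{Z(E)}=0$. $X$ is finitely boundedly complete if for every $E$, $n$, $(x_j)_{j=1}^n\in X(E)$ and scalars $\lambda_1,\dots,\lambda_n$: $\|(\lambda_jx_j)_{j=1}^n\|_{X(E)}\le\max_j|\lambda_j|\cdot\|(x_j)_{j=1}^n\|_{X(E)}$. For $u\in E\otimes F$, $\alpha_{X,Y}(u)=\inf\{\|(x_j)_{j=1}^n\|_{X(E)}\|(y_j)_{j=1}^n\|_{Y(F)}:u=\sum_{j=1}^nx_j\otimes y_j\}$, and $E\otimes_{\alpha_{X,Y}}F$ is $E\otimes F$ with this quasi-norm. A bilinear form $A\colon E\times F\to\mathbb{K}$ is $(X,Y;\ell_1)$-summing if $(A(x_j,y_j))_j\in\ell_1$ whenever $(x_j)\in X(E)$, $(y_j)\in Y(F)$; $\mathcal{L}_{X,Y;\ell_1}(E,F;\mathbb{K})$ denotes the space of such forms with norm $\|A\|_{X,Y;\ell_1}=\sup\{\|(A(x_j,y_j))_j\|_1:(x_j)\in B_{X(E)},(y_j)\in B_{Y(F)}\}$. *)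

(* Defs.v *)
From HB Require Import structures.
From mathcomp Require Import all_boot all_order all_algebra.
From mathcomp Require Import all_classical all_reals all_analysis.
From mathcomp Require Import complex.

Set Implicit Arguments.
Unset Strict Implicit.
Unset Printing Implicit Defensive.

Import Order.TTheory GRing.Theory Num.Theory.
Import numFieldNormedType.Exports.
Local Open Scope ring_scope.

(* Sequences are indexed by nat starting at 0: the paper's x_1, x_2, ...
   are x 0, x 1, ...  *)

Section Sequences.
Variable K : numFieldType.
Variable E : normedModType K.

Definition trunc (n : nat) (x : nat -> E) : nat -> E :=
  fun j => if (j < n)%N then x j else 0.

Definition tail (k : nat) (x : nat -> E) : nat -> E :=
  fun j => if (k <= j)%N then x j else 0.

Definition seg (k l : nat) (x : nat -> E) : nat -> E :=
  fun j => if (k <= j <= l)%N then x j else 0.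

Definition shift (m : nat) (x : nat -> E) : nat -> E :=
  fun j => if (m <= j)%N then x (j - m)%N else 0.

Definition single (j : nat) (a : E) : nat -> E :=
  fun i => if i == j then a else 0.

End Sequences.

Definition lim0 {K : numFieldType} (s : nat -> K) : Prop :=
  forall e : K, 0 < e -> exists N : nat, forall k, (N <= k)%N -> s k < e.

Definition lim0_2 {K : numFieldType} (s : nat -> nat -> K) : Prop :=
  forall e : K, 0 < e -> exists N : nat,
    forall k l, (N <= k)%N -> (N <= l)%N -> s k l < e.

Definition is_sup_seq {K : numFieldType} (s : nat -> K) (v : K) : Prop :=
  (forall k, s k <= v) /\ (forall C, (forall k, s k <= C) -> v <= C).

(* A Banach space X(E) which is a vector subspace of E^N (coordinatewise
   operations), containing c00(E), with ||.||_oo <= ||.||_X and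
   ||x e_j||_X = ||x||_E.  smem is the membership predicate, snorm the norm
   (its values outside smem are irrelevant). *)
Record SeqSpace (K : numFieldType) (E : completeNormedModType K) := {
  smem : (nat -> E) -> Prop;
  snorm : (nat -> E) -> K;
  smem0 : smem (fun _ => 0);
  smemD : forall x y, smem x -> smem y -> smem (fun j => x j + y j);
  smemZ : forall (a : K) x, smem x -> smem (fun j => a *: x j);
  snormD : forall x y, smem x -> smem y ->
    snorm (fun j => x j + y j) <= snorm x + snorm y;
  snormZ : forall (a : K) x, smem x -> snorm (fun j => a *: x j) = `|a| * snorm x;
  snorm_eq0 : forall x, smem x -> snorm x = 0 -> x = (fun _ => 0);
  scomplete : forall u : nat -> nat -> E, (forall k, smem (u k)) ->
    lim0_2 (fun k l => snorm (fun j => u k j - u l j)) ->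
    exists v, smem v /\ lim0 (fun k => snorm (fun j => u k j - v j));
  sc00 : forall n x, smem (trunc n x);
  snorm_sup : forall x, smem x -> forall j, `|x j| <= snorm x;
  snorm_single : forall j (a : E), snorm (single j a) = `|a|
}.

Definition SequenceClass (K : numFieldType) :=
  forall E : completeNormedModType K, SeqSpace E.

Section Classes.
Variable K : numFieldType.
Implicit Types X Y Z : SequenceClass K.

Definition monotone X : Prop :=
  forall (E : completeNormedModType K) (x : nat -> E) (n m : nat),
    snorm (X E) (shift m (trunc n x)) = snorm (X E) (trunc n x).

Definition finitely_determined X : Prop :=
  forall (E : completeNormedModType K) (x : nat -> E),
    (smem (X E) x <-> exists C, forall k, snorm (X E) (trunc k x) <= C) /\
    (smem (X E) x -> is_sup_seq (fun k => snorm (X E) (trunc k x)) (snorm (X E) x)).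

Definition closed_subspace_class X Z : Prop :=
  forall E : completeNormedModType K,
    (forall x, smem (X E) x -> smem (Z E) x) /\
    (forall x, smem (X E) x -> snorm (X E) x = snorm (Z E) x) /\
    (forall (u : nat -> nat -> E) (v : nat -> E),
       (forall k, smem (X E) (u k)) -> smem (Z E) v ->
       lim0 (fun k => snorm (Z E) (fun j => u k j - v j)) -> smem (X E) v).

Definition finitely_dominated X : Prop :=
  exists Z : SequenceClass K,
    finitely_determined Z /\ closed_subspace_class X Z /\
    ((forall (E : completeNormedModType K) (x : nat -> E), smem (Z E) x ->
        (smem (X E) x <-> lim0 (fun k => snorm (Z E) (tail k x)))) \/
     (forall (E : completeNormedModType K) (x : nat -> E), smem (Z E) x ->
        (smem (X E) x <-> lim0_2 (fun k l => snorm (Z E) (seg k l x))))).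

Definition finitely_boundedly_complete X : Prop :=
  forall (E : completeNormedModType K) (x : nat -> E) (lam : nat -> K) (n : nat),
    snorm (X E) (trunc n (fun j => lam j *: x j)) <=
      (\big[Num.max/0]_(j < n) `|lam j|) * snorm (X E) (trunc n x).

End Classes.

Section Tensor.
Variable K : numFieldType.

Definition lin_functional (V : lmodType K) (f : V -> K) : Prop :=
  forall (a : K) (u v : V), f (a *: u + v) = a * f u + f v.

Definition bilinear_form (E F : lmodType K) (B : E -> F -> K) : Prop :=
  (forall y, lin_functional (fun x => B x y)) /\
  (forall x, lin_functional (fun y => B x y)).

(* This characterizes E (x) F up to
   canonical isomorphism. *)
Definition is_tensor_product (E F T : lmodType K) (tens : E -> F -> T) : Prop :=
  [/\ (forall (a : K) x x' y, tens (a *: x + x') y = a *: tens x y + tens x' y),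
      (forall (a : K) x y y', tens x (a *: y + y') = a *: tens x y + tens x y'),
      (forall u : T, exists (n : nat) (x : nat -> E) (y : nat -> F),
          u = \sum_(j < n) tens (x j) (y j)) &
      (forall B : E -> F -> K, bilinear_form B ->
          exists f : T -> K, lin_functional f /\ forall x y, f (tens x y) = B x y)].

End Tensor.

Section Norms.
Variable K : numFieldType.
Variables (X Y : SequenceClass K).
Variables (E F : completeNormedModType K) (T : lmodType K) (tens : E -> F -> T).

(* alpha_{X,Y}(u) <= c, where alpha_{X,Y}(u) is the infimum of
   ||(x_j)_{j=1}^n||_X ||(y_j)_{j=1}^n||_Y over representations
   u = sum_{j=1}^n x_j (x) y_j *)
Definition alpha_le (u : T) (c : K) : Prop :=
  forall d : K, 0 < d -> exists (n : nat) (x : nat -> E) (y : nat -> F),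
    u = \sum_(j < n) tens (x j) (y j) /\
    snorm (X E) (trunc n x) * snorm (Y F) (trunc n y) <= c + d.

(* eps(u) <= c, where eps is the injective tensor norm:
   eps(u) = sup { |sum_j phi(x_j) psi(y_j)| : phi in B_{E'}, psi in B_{F'} };
   the functional u |-> sum_j phi(x_j) psi(y_j) is the linear functional g on T
   with g (x (x) y) = phi x * psi y. *)
Definition eps_le (u : T) (c : K) : Prop :=
  forall g : T -> K, lin_functional g ->
    (exists (phi : E -> K) (psi : F -> K),
       [/\ lin_functional phi, lin_functional psi,
           (forall x, `|phi x| <= `|x|), (forall y, `|psi y| <= `|y|) &
           (forall x y, g (tens x y) = phi x * psi y)]) ->
    `|g u| <= c.

(* C is an upper bound for the dual norm of f on E (x)_alpha F:
   sup { |f u| : alpha(u) <= 1 } <= C *)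
Definition dual_ub (f : T -> K) (C : K) : Prop :=
  forall u : T, alpha_le u 1 -> `|f u| <= C.

(* A is (X,Y;l1)-summing: (A(x_j,y_j))_j in l1 (bounded partial sums of
   absolute values) whenever (x_j) in X(E), (y_j) in Y(F) *)
Definition summing (A : E -> F -> K) : Prop :=
  forall (x : nat -> E) (y : nat -> F), smem (X E) x -> smem (Y F) y ->
    exists C : K, forall n, \sum_(j < n) `|A (x j) (y j)| <= C.

(* C is an upper bound for ||A||_{X,Y;l1} *)
Definition summing_ub (A : E -> F -> K) (C : K) : Prop :=
  forall (x : nat -> E) (y : nat -> F),
    smem (X E) x -> snorm (X E) x <= 1 -> smem (Y F) y -> snorm (Y F) y <= 1 ->
    forall n, \sum_(j < n) `|A (x j) (y j)| <= C.

End Norms.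

Definition theorem3p1_stmt (K : numFieldType) : Prop :=
  forall X Y : SequenceClass K,
    monotone X -> monotone Y ->
    (forall (E F : completeNormedModType K) (T : lmodType K) (tens : E -> F -> T),
       is_tensor_product tens ->
       forall (u : T) (c : K), alpha_le X Y tens u c -> eps_le tens u c) ->
    (finitely_determined X \/ finitely_dominated X) ->
    (finitely_determined Y \/ finitely_dominated Y) ->
    (finitely_boundedly_complete X \/ finitely_boundedly_complete Y) ->
    forall (E F : completeNormedModType K) (T : lmodType K) (tens : E -> F -> T),
      is_tensor_product tens ->
      (* A |-> phi_A maps L_{X,Y;l1}(E,F;K) isometrically into (E (x)_alpha F)^* *)
      (forall A : E -> F -> K, bilinear_form A -> summing X Y A ->
         exists f : T -> K,
           [/\ lin_functional f,
               (forall x y, f (tens x y) = A x y),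
               (exists C, dual_ub X Y tens f C) &
               (forall C, dual_ub X Y tens f C <-> summing_ub X Y A C)]) /\
      (* ... and onto: every element of (E (x)_alpha F)^* is some phi_A *)
      (forall f : T -> K, lin_functional f -> (exists C, dual_ub X Y tens f C) ->
         bilinear_form (fun x y => f (tens x y)) /\
         summing X Y (fun x y => f (tens x y))).

(* Main.v *)
Require Import Defs.
From HB Require Import structures.
From mathcomp Require Import all_boot all_order all_algebra.
From mathcomp Require Import all_classical all_reals all_analysis.
From mathcomp Require Import complex zify.

Set Implicit Arguments.
Unset Strict Implicit.
Unset Printing Implicit Defensive.
Import Order.TTheory GRing.Theory Num.Theory.
Import numFieldNormedType.Exports.
Local Open Scope ring_scope.

Section Gen.
Variable K : numFieldType.

Definition Harch := forall c : K, 0 <= c -> exists k : nat, c <= k%:R.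

Lemma Hunit (z : K) : exists l : K, `|l| <= 1 /\ l * z = `|z|.
Proof.
case: (eqVneq z 0) => [->|hz].
  by exists 1; rewrite normr1 mulr0 normr0.
exists (`|z| / z); split; last by rewrite mulfVK.
by rewrite normrM normfV normr_id mulfV ?normr_eq0.
Qed.

Lemma snorm_ge0 (E : completeNormedModType K) (S : SeqSpace E) x :
  smem S x -> 0 <= snorm S x.
Proof. by move=> hx; exact: le_trans (normr_ge0 (x 0%N)) (snorm_sup hx 0%N). Qed.

Lemma snorm_zero (E : completeNormedModType K) (S : SeqSpace E) :
  snorm S (fun _ => 0) = 0.
Proof.
have -> : (fun _ : nat => 0 : E) = single 0 0 by apply: funext => i; rewrite /single; case: eqP.
by rewrite snorm_single normr0.
Qed.

Lemma snormZ' (E : completeNormedModType K) (S : SeqSpace E) a x :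
  smem S x -> snorm S (fun j => a *: x j) = `|a| * snorm S x.
Proof. exact: snormZ. Qed.

Lemma absK (c : K) : 0 <= c -> `|c| = c.
Proof. exact: ger0_norm. Qed.

Lemma truncZ (E : completeNormedModType K) n (a : K) (x : nat -> E) :
  trunc n (fun j => a *: x j) = (fun j => a *: trunc n x j).
Proof. by apply: funext => j; rewrite /trunc; case: ifP; rewrite ?scaler0. Qed.

Definition FDX (X : SequenceClass K) := finitely_determined X \/ finitely_dominated X.

Lemma trunc_le (X : SequenceClass K) : FDX X -> forall E x, smem (X E) x ->
  forall n, snorm (X E) (trunc n x) <= snorm (X E) x.
Proof.
case=> [HF|[Z [HZ [HC _]]]] E x hx n.
- by have [_ /(_ hx) [H _]] := HF E x; exact: H.
- have [h1 [h2 _]] := HC E.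
  rewrite (h2 _ (sc00 _ n x)) (h2 _ hx).
  by have [_ /(_ (h1 _ hx)) [H _]] := HZ E x; exact: H.
Qed.

Lemma small_eq0 (E : completeNormedModType K) (z : E) :
  (forall e : K, 0 < e -> `|z| < e) -> z = 0.
Proof.
move=> H; case: (eqVneq z 0) => // hz.
have hz' : 0 < `|z| by rewrite normr_gt0.
by have := H _ hz'; rewrite ltxx.
Qed.


Definition w (k : nat) : K := ((2:K) ^+ k)^-1.
Definition offs (ns : nat -> nat) (k : nat) : nat := (\sum_(0 <= i < k) ns i)%N.

Lemma w_gt0 k : 0 < w k.
Proof. by rewrite invr_gt0 exprn_gt0 // ltr0n. Qed.

Lemma wS k : 2 * w k.+1 = w k.
Proof. by rewrite /w exprS invfM mulrA mulfV ?mul1r // pnatr_eq0. Qed.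

Lemma geo k m : \sum_(k <= q < k + m) w q + 2 * w (k + m)%N = 2 * w k.
Proof.
elim: m => [|m IH]; first by rewrite addn0 big_geq // add0r.
rewrite addnS big_nat_recr ?leq_addr //= wS -IH -addrA; congr (_ + _).
by rewrite mulr_natl mulr2n.
Qed.

Lemma geo_le k l : (k <= l)%N -> \sum_(k <= q < l) w q <= 2 * w k.
Proof.
move=> kl; rewrite -(subnKC kl) -(geo k (l - k)) lerDl mulr_ge0 //.
exact: ltW (w_gt0 _).
Qed.

Lemma w_small (HA : Harch) (e : K) : 0 < e -> exists N, forall k, (N <= k)%N -> 2 * w k < e.
Proof.
move=> e0; have [N HN] := HA (2 / e) (ltW (divr_gt0 (ltr0n _ 2) e0)).
exists N => k hk.
have h2 : 0 < (2:K) ^+ k by rewrite exprn_gt0 // ltr0n.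
rewrite /w ltr_pdivrMr // mulrC -ltr_pdivrMr //.
apply: le_lt_trans HN _; rewrite -natrX ltr_nat.
exact: leq_ltn_trans hk (ltn_expl k (isT : (1 < 2)%N)).
Qed.

Lemma offsS ns q : offs ns q.+1 = (offs ns q + ns q)%N.
Proof. by rewrite /offs big_nat_recr. Qed.

Lemma offs_mono ns a b : (a <= b)%N -> (offs ns a <= offs ns b)%N.
Proof. by move=> ab; rewrite /offs (@big_cat_nat _ _ _ a 0 b) //= leq_addr. Qed.

Lemma sum_seq (E : completeNormedModType K) (S : SeqSpace E) (b : nat -> nat -> E)
  (c : nat -> K) (s : seq nat) : (forall q, smem S (b q)) ->
  (forall q, snorm S (b q) <= c q) ->
  smem S (fun j => \sum_(q <- s) b q j) /\
  snorm S (fun j => \sum_(q <- s) b q j) <= \sum_(q <- s) c q.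
Proof.
move=> hb nb; elim: s => [|a s [IH1 IH2]].
  have -> : (fun j => \sum_(q <- [::]) b q j) = (fun _ => 0).
    by apply: funext => j; rewrite big_nil.
  by split; [exact: smem0 | rewrite snorm_zero big_nil].
have -> : (fun j => \sum_(q <- a :: s) b q j) = (fun j => b a j + \sum_(q <- s) b q j).
  by apply: funext => j; rewrite big_cons.
split; first exact: smemD.
apply: le_trans (snormD (hb a) IH1) _.
by rewrite big_cons lerD.
Qed.

Lemma shift_trunc (E : completeNormedModType K) (m n : nat) (z : nat -> E) :
  Defs.shift m (trunc n z) = trunc (m + n)%N (Defs.shift m z).
Proof.
apply: funext => j; rewrite /Defs.shift /trunc.
case: (leqP m j) => hj; first by rewrite ltn_subLR.
by case: ifP.
Qed.

Lemma glue (X : SequenceClass K) (E : completeNormedModType K) : Harch ->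
  Defs.monotone X -> FDX X -> forall (xs : nat -> nat -> E) (ns : nat -> nat),
  (forall k, smem (X E) (xs k)) -> (forall k, snorm (X E) (xs k) <= 1) ->
  exists v, smem (X E) v /\
    forall k i, (i < ns k)%N -> v (offs ns k + i)%N = w k *: xs k i.
Proof.
move=> HA mX FX xs ns hx nx.
pose blk k := Defs.shift (offs ns k) (trunc (ns k) (fun j => w k *: xs k j)).
have hblk : forall k, smem (X E) (blk k) by move=> k; rewrite /blk shift_trunc; exact: sc00.
have nblk : forall k, snorm (X E) (blk k) <= w k.
  move=> k; rewrite /blk mX truncZ (snormZ' _ (sc00 _ _ _)) (absK (ltW (w_gt0 k))).
  rewrite -[X in _ <= X]mulr1 ler_wpM2l ?(ltW (w_gt0 k)) //.
  exact: le_trans (trunc_le FX (hx k) _) (nx k).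
pose P K := fun j => \sum_(0 <= q < K) blk q j.
have hP : forall K, smem (X E) (P K).
  by move=> K0; have [] := sum_seq (index_iota 0 K0) hblk nblk.
have Hc : lim0_2 (fun k l => snorm (X E) (fun j => P k j - P l j)).
  move=> e e0; have [N HN] := w_small HA e0; exists N => k l hk hl.
  case: (leqP k l) => kl.
  - have -> : (fun j => P k j - P l j) = (fun j => (-1) *: \sum_(k <= q < l) blk q j).
      apply: funext => j; rewrite /P (@big_cat_nat _ _ _ k 0 l) //=.
      by rewrite scaleN1r opprD addrA subrr add0r.
    have [hD nD] := sum_seq (index_iota k l) hblk nblk.
    rewrite (snormZ' _ hD) normrN1 mul1r.
    apply: le_lt_trans nD _; apply: le_lt_trans (geo_le kl) _; exact: HN.
  - have -> : (fun j => P k j - P l j) = (fun j => \sum_(l <= q < k) blk q j).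
      apply: funext => j; rewrite /P (@big_cat_nat _ _ _ l 0 k) ?(ltnW kl) //=.
      by rewrite addrAC subrr add0r.
    have [hD nD] := sum_seq (index_iota l k) hblk nblk.
    apply: le_lt_trans nD _; apply: le_lt_trans (geo_le (ltnW kl)) _; exact: HN.
have [v [hv Hlim]] := scomplete hP Hc.
exists v; split => // k i hi.
have HPj : forall K0, (k < K0)%N -> P K0 (offs ns k + i)%N = w k *: xs k i.
  move=> K0 kK; rewrite /P (bigD1_seq k) ?mem_index_iota ?iota_uniq //=.
  rewrite big1 ?addr0.
    by rewrite /blk /Defs.shift /trunc leq_addr addKn hi.
  move=> q hq; rewrite /blk /Defs.shift /trunc.
  case: (ltngtP q k) hq => // hqk _.
  - have h1 := offs_mono ns hqk; rewrite offsS in h1.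
    case: ifP => // h2; rewrite ifF //.
    apply/negbTE; rewrite -leqNgt; lia.
  - have h1 := offs_mono ns hqk; rewrite offsS in h1.
    rewrite ifF //; apply/negbTE; rewrite -ltnNge; lia.
apply/esym/subr0_eq/small_eq0 => e e0.
have [N HN] := Hlim e e0.
have := HN (maxn N k.+1) (leq_maxl _ _).
apply: le_lt_trans.
rewrite -(HPj (maxn N k.+1)) ?leq_maxr //.
have hd : smem (X E) (fun j => P (maxn N k.+1) j - v j).
  have -> : (fun j => P (maxn N k.+1) j - v j) = (fun j => P (maxn N k.+1) j + (-1) *: v j).
    by apply: funext => j; rewrite scaleN1r.
  exact: smemD (hP _) (smemZ (-1) hv).
exact: (snorm_sup hd (offs ns k + i)%N).
Qed.

Section Tens.
Variables (E F : completeNormedModType K) (T : lmodType K) (tens : E -> F -> T).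
Hypothesis Ht : is_tensor_product tens.

Lemma tensZl a x y : tens (a *: x) y = a *: tens x y.
Proof.
case: Ht => HL _ _ _.
have h0 : tens 0 y = 0.
  have := HL 1 0 0 y; rewrite scaler0 addr0 scale1r => /eqP.
  by rewrite -subr_eq subrr eq_sym => /eqP.
by have := HL a x 0 y; rewrite addr0 h0 addr0.
Qed.

Lemma tensZr a x y : tens x (a *: y) = a *: tens x y.
Proof.
case: Ht => _ HR _ _.
have h0 : tens x 0 = 0.
  have := HR 1 x 0 0; rewrite scaler0 addr0 scale1r => /eqP.
  by rewrite -subr_eq subrr eq_sym => /eqP.
by have := HR a x y 0; rewrite addr0 h0 addr0.
Qed.

Lemma tens0l y : tens 0 y = 0.
Proof. by rewrite -(scale0r (0 : E)) tensZl scale0r. Qed.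

Lemma tens0r x : tens x 0 = 0.
Proof. by rewrite -(scale0r (0 : F)) tensZr scale0r. Qed.

Variable f : T -> K.
Hypothesis Hf : lin_functional f.

Lemma f0 : f 0 = 0.
Proof.
have := Hf 1 0 0; rewrite scaler0 addr0 mul1r => /eqP.
by rewrite -subr_eq subrr eq_sym => /eqP.
Qed.

Lemma fZ a u : f (a *: u) = a * f u.
Proof. by have := Hf a u 0; rewrite !addr0 f0 addr0. Qed.

Lemma fD u v : f (u + v) = f u + f v.
Proof. by have := Hf 1 u v; rewrite scale1r mul1r. Qed.

Lemma f_sum (I : Type) (r : seq I) (g : I -> T) :
  f (\sum_(j <- r) g j) = \sum_(j <- r) f (g j).
Proof.
elim: r => [|a r IH]; first by rewrite !big_nil f0.
by rewrite !big_cons fD IH.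
Qed.

Lemma AZ s t x y : f (tens (s *: x) (t *: y)) = s * t * f (tens x y).
Proof. by rewrite tensZl tensZr scalerA fZ. Qed.


Variables (X Y : SequenceClass K).

Lemma max_le1 n (lam : nat -> K) : (forall j, `|lam j| <= 1) ->
  \big[Num.max/0]_(j < n) `|lam j| <= 1.
Proof.
move=> H; apply: (big_ind (fun v => v <= 1)) => //.
by move=> a b ha hb; rewrite /Num.max /Order.max; case: ifP.
Qed.

Lemma dual_to_summing C : FDX X -> FDX Y ->
  (finitely_boundedly_complete X \/ finitely_boundedly_complete Y) ->
  dual_ub X Y tens f C -> summing_ub X Y (fun x y => f (tens x y)) C.
Proof.
move=> FX FY Hfbc Hd x y hx nx hy ny n.
have [lam Hlam] := choice (fun j => Hunit (f (tens (x j) (y j)))).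
have Hmax := max_le1 n (fun j => (Hlam j).1).
have Hx1 : snorm (X E) (trunc n x) <= 1 := le_trans (trunc_le FX hx n) nx.
have Hy1 : snorm (Y F) (trunc n y) <= 1 := le_trans (trunc_le FY hy n) ny.
have Hx0 := snorm_ge0 (sc00 (X E) n x).
have Hy0 := snorm_ge0 (sc00 (Y F) n y).
case: Hfbc => HB.
- set u := \sum_(j < n) tens (lam j *: x j) (y j).
  have fu : f u = \sum_(j < n) `|f (tens (x j) (y j))|.
    by rewrite /u f_sum; apply: eq_bigr => j _; rewrite tensZl fZ; exact: (Hlam j).2.
  have := Hd u; rewrite fu ger0_norm ?sumr_ge0 //; apply.
  move=> d d0; exists n, (fun j => lam j *: x j), y; split=> //.
  have h1 : snorm (X E) (trunc n (fun j => lam j *: x j)) <= 1.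
    apply: le_trans (HB E x lam n) _.
    by apply: le_trans (ler_wpM2r Hx0 Hmax) _; rewrite mul1r.
  apply: le_trans (ler_pM (snorm_ge0 (sc00 _ _ _)) Hy0 h1 Hy1) _.
  by rewrite mulr1 lerDl ltW.
- set u := \sum_(j < n) tens (x j) (lam j *: y j).
  have fu : f u = \sum_(j < n) `|f (tens (x j) (y j))|.
    by rewrite /u f_sum; apply: eq_bigr => j _; rewrite tensZr fZ; exact: (Hlam j).2.
  have := Hd u; rewrite fu ger0_norm ?sumr_ge0 //; apply.
  move=> d d0; exists n, x, (fun j => lam j *: y j); split=> //.
  have h1 : snorm (Y F) (trunc n (fun j => lam j *: y j)) <= 1.
    apply: le_trans (HB F y lam n) _.
    by apply: le_trans (ler_wpM2r Hy0 Hmax) _; rewrite mul1r.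
  apply: le_trans (ler_pM Hx0 (snorm_ge0 (sc00 _ _ _)) Hx1 h1) _.
  by rewrite mulr1 lerDl ltW.
Qed.


Lemma summing_to_dual C :
  summing_ub X Y (fun x y => f (tens x y)) C -> dual_ub X Y tens f C.
Proof.
move=> HS u Hu.
have C0 : 0 <= C.
  have := HS (fun _ => 0) (fun _ => 0) (smem0 _) _ (smem0 _) _ 0%N.
  by rewrite big_ord0; apply; rewrite snorm_zero.
have C10 : 0 < C + 1 by rewrite ltr_wpDl.
apply/ler_addgt0Pr => e e0.
set d := e / (C + 1).
have d0 : 0 < d by rewrite divr_gt0.
have [n [x [y [-> Hab]]]] := Hu d d0.
suff H : `|f (\sum_(j < n) tens (x j) (y j))| <= C * (1 + d).
  apply: le_trans H _; rewrite mulrDr mulr1 lerD2l /d mulrA ler_pdivrMr //.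
  by rewrite mulrC ler_wpM2l ?(ltW e0) // lerDl ler01.
rewrite (f_sum _ (fun j : 'I_n => tens (x j) (y j))); apply: le_trans (ler_norm_sum _ _ _) _.
set a := snorm (X E) (trunc n x).
set b := snorm (Y F) (trunc n y).
have a0 : 0 <= a := snorm_ge0 (sc00 _ _ _).
have b0 : 0 <= b := snorm_ge0 (sc00 _ _ _).
suff Hm : \sum_(j < n) `|f (tens (x j) (y j))| <= C * (a * b).
  by apply: le_trans Hm _; rewrite ler_wpM2l.
case: (eqVneq a 0) => [ha|ha].
  have hz := snorm_eq0 (sc00 _ _ _) ha.
  rewrite big1 ?mulr_ge0 // => j _.
  have : trunc n x j = 0 by rewrite hz.
  by rewrite /trunc ltn_ord => ->; rewrite tens0l ?f0 ?normr0.
case: (eqVneq b 0) => [hb|hb].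
  have hz := snorm_eq0 (sc00 _ _ _) hb.
  rewrite big1 ?mulr_ge0 // => j _.
  have : trunc n y j = 0 by rewrite hz.
  by rewrite /trunc ltn_ord => ->; rewrite tens0r ?f0 ?normr0.
have ap : 0 < a by rewrite lt_def ha.
have bp : 0 < b by rewrite lt_def hb.
have := HS (trunc n (fun j => a^-1 *: x j)) (trunc n (fun j => b^-1 *: y j))
  (sc00 _ _ _) _ (sc00 _ _ _) _ n.
have -> : \sum_(j < n) `|f (tens (trunc n (fun j => a^-1 *: x j) j)
                                  (trunc n (fun j => b^-1 *: y j) j))|
        = (a * b)^-1 * \sum_(j < n) `|f (tens (x j) (y j))|.
  rewrite mulr_sumr; apply: eq_bigr => j _.
  rewrite /trunc ltn_ord AZ normrM invfM.
  by rewrite ger0_norm // divr_ge0 ?invr_ge0.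
rewrite ler_pdivrMl ?mulr_gt0 // mulrC; apply.
  by rewrite truncZ (snormZ' _ (sc00 _ _ _)) absK ?invr_ge0 // mulVf.
by rewrite truncZ (snormZ' _ (sc00 _ _ _)) absK ?invr_ge0 // mulVf.
Qed.


Lemma hump : Harch -> Defs.monotone X -> Defs.monotone Y -> FDX X -> FDX Y ->
  summing X Y (fun x y => f (tens x y)) ->
  exists C, summing_ub X Y (fun x y => f (tens x y)) C.
Proof.
move=> HA mX mY FX FY HS.
case: (pselect (exists C, summing_ub X Y (fun x y => f (tens x y)) C)) => // Hn.
exfalso.
pose M k : K := k%:R / (w k * w k).
have H1 : forall k, exists p : (nat -> E) * (nat -> F) * nat,
    [/\ smem (X E) p.1.1, snorm (X E) p.1.1 <= 1, smem (Y F) p.1.2,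
        snorm (Y F) p.1.2 <= 1 &
        ~~ (\sum_(j < p.2) `|f (tens (p.1.1 j) (p.1.2 j))| <= M k)].
  move=> k; apply: contrapT => Hq; apply: Hn; exists (M k) => x y hx nx hy ny n.
  apply: contrapT => hs; apply: Hq; exists (x, y, n); split => //.
  exact/negP.
have [g Hg] := choice H1.
pose xs k := (g k).1.1.
pose ys k := (g k).1.2.
pose ns k := (g k).2.
have hxs : forall k, smem (X E) (xs k) by move=> k; case: (Hg k).
have nxs : forall k, snorm (X E) (xs k) <= 1 by move=> k; case: (Hg k).
have hys : forall k, smem (Y F) (ys k) by move=> k; case: (Hg k).
have nys : forall k, snorm (Y F) (ys k) <= 1 by move=> k; case: (Hg k).
have [v [hv Hv]] := glue HA mX FX ns hxs nxs.
have [u [hu Hu]] := glue HA mY FY ns hys nys.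
have [C0 HC0] := HS v u hv hu.
have C00 : 0 <= C0 by have := HC0 0%N; rewrite big_ord0.
have [N HN] := HA C0 C00.
have wN := w_gt0 N.
case: (Hg N) => _ _ _ _ /negP; apply.
rewrite ler_pdivlMr ?mulr_gt0 //.
apply: le_trans HN.
have := HC0 (offs ns N + ns N)%N.
rewrite big_split_ord /=.
apply: le_trans.
rewrite -[X in X <= _]add0r; apply: lerD; first exact: sumr_ge0.
rewrite mulrC mulr_sumr le_eqVlt; apply/orP; left; apply/eqP.
apply: eq_bigr => i _.
by rewrite Hv // Hu // AZ normrM (absK (mulr_ge0 (ltW wN) (ltW wN))).
Qed.

End Tens.

Lemma main_gen : Harch -> theorem3p1_stmt K.
Proof.
move=> HA X Y mX mY _ FX FY Hfbc E F T tens Ht; split.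
- move=> A HAb HAs.
  have [f [Hf Hft]] := (let: And4 _ _ _ h := Ht in h) A HAb.
  have eA : (fun x y => f (tens x y)) = A.
    by apply: funext => x; apply: funext => y.
  subst A; exists f; split => //.
  + have [C HC] := hump Ht Hf HA mX mY FX FY HAs.
    by exists C; apply: summing_to_dual.
  + move=> C; split => H.
    * exact: dual_to_summing.
    * exact: summing_to_dual.
- move=> f Hf [C HC]; split.
  + case: (Ht) => HL HR _ _.
    by split => [y | x] a u v /=; rewrite ?HL ?HR Hf.
  + move=> x y hx hy.
    have ap : 0 < snorm (X E) x + 1 by rewrite ltr_wpDl ?snorm_ge0.
    have bp : 0 < snorm (Y F) y + 1 by rewrite ltr_wpDl ?snorm_ge0.
    set a := snorm (X E) x + 1 in ap *.
    set b := snorm (Y F) y + 1 in bp *.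
    have HS := dual_to_summing Ht Hf FX FY Hfbc HC.
    exists (a * b * C) => n.
    have := HS (fun j => a^-1 *: x j) (fun j => b^-1 *: y j) (smemZ _ hx) _ (smemZ _ hy) _ n.
    have -> : \sum_(j < n) `|f (tens (a^-1 *: x j) (b^-1 *: y j))|
            = (a * b)^-1 * \sum_(j < n) `|f (tens (x j) (y j))|.
      rewrite mulr_sumr; apply: eq_bigr => j _.
      have hab : 0 <= a^-1 / b by rewrite divr_ge0 // ?invr_ge0 ltW.
      by rewrite (AZ Ht Hf) normrM invfM (absK hab).
    rewrite ler_pdivrMl ?mulr_gt0 //; apply.
      have ai : 0 <= a^-1 by rewrite invr_ge0 ltW.
      by rewrite (snormZ' _ hx) (absK ai) ler_pdivrMl // mulr1 lerDl.
    have bi : 0 <= b^-1 by rewrite invr_ge0 ltW.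
    by rewrite (snormZ' _ hy) (absK bi) ler_pdivrMl // mulr1 lerDl.
Qed.

End Gen.

Lemma Harch_real (R : realType) : Harch R.
Proof. move=> c c0; exists (Num.Def.archi_bound c); exact/ltW/archi_boundP. Qed.

Lemma Harch_cplx (R : realType) : Harch R[i].
Proof.
move=> c c0.
have hr := ger0_real c0.
have c0' : 0 <= complex.Re c by rewrite -ler0c (RRe_real hr).
exists (Num.Def.archi_bound (complex.Re c)).
rewrite -(RRe_real hr) -(rmorph_nat (real_complex R)) lecR.
exact/ltW/archi_boundP.
Qed.

Theorem theorem3p1 (R : realType) :
  theorem3p1_stmt R /\ theorem3p1_stmt R[i].
Proof.
split; apply: main_gen; [exact: Harch_real | exact: Harch_cplx].
Qed.
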